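(* Let $G$ be a finite simple graph on $[d]$, $k\ge1$, and let $f,g$ be $k$-colorings of $G$. Then $f\sim_k g$ if and only if ${\bf x}_f-{\bf x}_g\in\langle [I_G]_2\rangle$.
   Context: A $k$-coloring of a graph $H$ is a map $f:V(H)\to[k]$ (not necessarily surjective) with $f(u)\neq f(v)$ for every edge. A Kempe switching: for colors $i<j$ and a connected component $C$ of $H[f^{-1}(i)\cup f^{-1}(j)]$, interchange $i$ and $j$ on $C$. $f\sim_k g$ (Kempe equivalent) if $g$ is obtained from $f$ by a finite sequence of Kempe switchings. A stable set of $G$ is a subset of $[d]$ with no edge of $G$ (including $\emptyset$ and singletons); $S(G)$ is the set of stable sets; $R[G]=\mathbb{K}[x_S : S\in S(G)]$ over a field $\mathbb{K}$, all variables of degree $1$. For a $k$-coloring $f$ of an induced subgraph $G[W]$, ${\bf x}_f=\prod_{\ell=1}^k x_{f^{-1}(\ell)}$. The stable set ideal $I_G$ is the kernel of the ring map $\pi:R[G]\to\mathbb{K}[t_1,\dots,t_d,s]$, $\pi(x_S)=s\prod_{j\in S}t_j$; a binomial $x_{S_1}\cdots x_{S_r}-x_{T_1}\cdots x_{T_r}$ lies in $I_G$ iff $S_1\cup\dots\cup S_r=T_1\cup\dots\cup T_r$ as multisets. $\langle [I_G]_2\rangle$ denotes the ideal of $R[G]$ generated by the homogeneous elements of degree $2$ of $I_G$ (equivalently, by the quadratic binomials in $I_G$). *)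

(* Defs.v *)
From HB Require Import structures.
From mathcomp Require Import all_boot all_order all_algebra.
From mathcomp Require Import mpoly.
Set Implicit Arguments. Unset Strict Implicit. Unset Printing Implicit Defensive.
Import GRing.Theory.
Local Open Scope ring_scope.

(* A simple graph on [d] = 'I_d is a relation G : rel 'I_d,
   assumed symmetric and irreflexive in the theorem.  Colors [k] = 'I_k. *)

Section Kempe.
Variables (d k : nat) (G : rel 'I_d).

Definition is_coloring (f : {ffun 'I_d -> 'I_k}) : Prop :=
  forall u v, G u v -> f u != f v.

Definition colored_ij (f : {ffun 'I_d -> 'I_k}) (i j : 'I_k) (v : 'I_d) : bool :=
  (f v == i) || (f v == j).

Definition kempe_edge (f : {ffun 'I_d -> 'I_k}) (i j : 'I_k) : rel 'I_d :=
  fun u v => [&& G u v, colored_ij f i j u & colored_ij f i j v].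

Definition kempe_chain (f : {ffun 'I_d -> 'I_k}) (i j : 'I_k) (u : 'I_d)
  : {set 'I_d} := [set v | connect (kempe_edge f i j) u v].

Definition kempe_switch (f : {ffun 'I_d -> 'I_k}) (i j : 'I_k) (C : {set 'I_d})
  : {ffun 'I_d -> 'I_k} :=
  [ffun v => if v \in C then
               (if f v == i then j else if f v == j then i else f v)
             else f v].

Definition kempe_step : rel {ffun 'I_d -> 'I_k} :=
  fun f g => [exists i : 'I_k, exists j : 'I_k, exists u : 'I_d,
    [&& (i < j)%N, colored_ij f i j u & g == kempe_switch f i j (kempe_chain f i j u)]].

Definition kempe_equiv (f g : {ffun 'I_d -> 'I_k}) : Prop :=
  connect kempe_step f g.

Definition stable (S : {set 'I_d}) : bool :=
  [forall u in S, forall v in S, ~~ G u v].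

Definition stableT := {S : {set 'I_d} | stable S}.

Definition nvars : nat := #|{: stableT}|.

Variable K : fieldType.

Definition RG := {mpoly K[nvars]}.

Definition xvar (S : stableT) : RG := 'X_(enum_rank S).

(* x_S for an arbitrary set: the variable if S is stable (0 otherwise; only
   applied to stable sets below) *)
Definition xset (S : {set 'I_d}) : RG :=
  if insub S is Some s then xvar s else 0.

Definition xmon_col (f : {ffun 'I_d -> 'I_k}) : RG :=
  \prod_(l < k) xset [set v | f v == l].

(* target ring K[t_1..t_d, s]: t_j = 'X_(widen j), s = 'X_(ord_max) *)
Definition pi_var (S : stableT) : {mpoly K[d.+1]} :=
  'X_(@ord_max d) * \prod_(j in val S) 'X_(widen_ord (leqnSn d) j).

Definition piG (p : RG) : {mpoly K[d.+1]} :=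
  comp_mpoly [tuple pi_var (enum_val i) | i < nvars] p.

Definition in_IG (p : RG) : bool := piG p == 0.

Definition homog2 (p : RG) : bool := all [pred m | mdeg m == 2%N] (msupp p).

Definition IG2 (p : RG) : bool := homog2 p && in_IG p.

Definition in_ideal_gen (P : pred RG) (p : RG) : Prop :=
  exists (s : seq (RG * RG)),
    all (fun hq => P hq.2) s /\ p = \sum_(hq <- s) hq.1 * hq.2.

End Kempe.

(* Main.v *)
Require Import Defs.
From HB Require Import structures.
From mathcomp Require Import all_boot all_order all_algebra.
From mathcomp Require Import mpoly.
From mathcomp Require Import zify.

Module Helpers.
Set Implicit Arguments. Unset Strict Implicit. Unset Printing Implicit Defensive.
Import GRing.Theory.

Section Col.
Variables (d k : nat) (G : rel 'I_d) (Gsym : ssrbool.symmetric G).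
Local Notation col := {ffun 'I_d -> 'I_k}.
Local Notation proper := (is_coloring G).
Local Notation kequiv := (kempe_equiv G).

Definition cls (h : col) (l : 'I_k) : {set 'I_d} := [set v | h v == l].

Lemma proper_stable h : proper h <-> forall l, stable G (cls h l).
Proof.
split.
- move=> ph l; apply/forallP => u; apply/implyP; rewrite inE => /eqP hu.
  apply/forallP => v; apply/implyP; rewrite inE => /eqP hv.
  by apply/negP => /ph; rewrite hu hv eqxx.
- move=> st u v Guv; apply/negP => /eqP huv.
  have := st (h u); move/forallP/(_ u); rewrite inE eqxx /= => /forallP/(_ v).
  by rewrite inE huv eqxx /= Guv.
Qed.

Definition sw (i j c : 'I_k) := if c == i then j else if c == j then i else c.

Lemma swK i j : i != j -> involutive (sw i j).
Proof.
move=> ij c; have ji : j != i by rewrite eq_sym.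
rewrite /sw; have [ci|ci] := boolP (c == i).
  by rewrite (eqP ci) (negbTE ji) eqxx.
have [cj|cj] := boolP (c == j).
  by rewrite /= eqxx (eqP cj).
by rewrite /= ?(negbTE ci) ?(negbTE cj).
Qed.

Lemma sw_col i j c : ((sw i j c == i) || (sw i j c == j)) = ((c == i) || (c == j)).
Proof.
rewrite /sw; have [ci|ci] := boolP (c == i).
  by rewrite /= eqxx orbT.
have [cj|cj] := boolP (c == j).
  by rewrite /= eqxx.
by rewrite /= ?(negbTE ci) ?(negbTE cj).
Qed.

Lemma sw_ncol i j c : ~~ ((c == i) || (c == j)) -> sw i j c = c.
Proof. by rewrite /sw; case: (c == i); case: (c == j). Qed.

Lemma colored_sym (h : col) i j v : colored_ij h i j v = colored_ij h j i v.
Proof. by rewrite /colored_ij orbC. Qed.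

Lemma chain_colored (h : col) i j v x : colored_ij h i j v ->
  x \in kempe_chain G h i j v -> colored_ij h i j x.
Proof.
move=> cv; rewrite inE => cx.
have cl : closed (kempe_edge G h i j) (colored_ij h i j).
  by move=> a b /and3P[_ ca cb]; rewrite -!topredE /= ca cb.
by have := closed_connect cl cx; rewrite -!topredE /= => <-.
Qed.

Lemma switchE (h : col) i j C x : kempe_switch h i j C x =
  if x \in C then sw i j (h x) else h x.
Proof. by rewrite ffunE. Qed.

Lemma switch_colored (h : col) i j C v :
  colored_ij (kempe_switch h i j C) i j v = colored_ij h i j v.
Proof. by rewrite /colored_ij switchE; case: ifP => // _; rewrite sw_col. Qed.

Lemma switch_ncol (h : col) i j C v : ~~ colored_ij h i j v ->
  kempe_switch h i j C v = h v.
Proof. by move=> nc; rewrite switchE; case: ifP => // _; rewrite sw_ncol. Qed.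

Lemma switch_proper (h : col) i j v : i != j -> proper h -> colored_ij h i j v ->
  proper (kempe_switch h i j (kempe_chain G h i j v)).
Proof.
move=> ij ph cv.
set C := kempe_chain G h i j v.
have key : forall x y, G x y -> x \in C -> y \notin C -> kempe_switch h i j C x != kempe_switch h i j C y.
  move=> x y Gxy xC yC; rewrite !switchE xC (negbTE yC).
  have cx := chain_colored cv xC.
  have cy : ~~ colored_ij h i j y.
    apply/negP => cy; move: yC; rewrite inE; apply/negP/negPn.
    apply: connect_trans (_ : connect _ x y); first by move: xC; rewrite inE.
    by apply: connect1; rewrite /kempe_edge Gxy cx cy.
  apply/eqP => e; move: cy; rewrite /colored_ij -e sw_col.
  by move: cx; rewrite /colored_ij => ->.
move=> x y Gxy.
case xC: (x \in C); case yC: (y \in C).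
- by rewrite !switchE xC yC (inj_eq (can_inj (swK ij))) ph.
- by apply: key => //; rewrite yC.
- by rewrite eq_sym; apply: key => //; [rewrite Gsym | rewrite xC].
- by rewrite !switchE xC yC ph.
Qed.

Lemma two_vals (i j a b a' b' : 'I_k) : i != j ->
  (a == i) || (a == j) -> (b == i) || (b == j) ->
  (a' == i) || (a' == j) -> (b' == i) || (b' == j) ->
  a != b -> a' != b' -> (a' != a) = (b' != b).
Proof.
move=> ij; have ji : j != i by rewrite eq_sym.
move=> /orP[/eqP->|/eqP->] /orP[/eqP->|/eqP->] /orP[/eqP->|/eqP->] /orP[/eqP->|/eqP->];
  by rewrite ?eqxx ?(negbTE ij) ?(negbTE ji).
Qed.

Lemma flip_val (i j a a' : 'I_k) : i != j -> a' != a ->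
  (a == i) || (a == j) -> (a' == i) || (a' == j) -> sw i j a = a'.
Proof.
move=> ij; have ji : j != i by rewrite eq_sym.
rewrite /sw => na ca ca'; move: ca ca' na => /orP[/eqP->|/eqP->] /orP[/eqP->|/eqP->];
  by rewrite ?eqxx ?(negbTE ij) ?(negbTE ji).
Qed.

Lemma flip_closed (h h' : col) i j : i != j -> proper h -> proper h' ->
  (forall v, colored_ij h i j v = colored_ij h' i j v) ->
  closed (kempe_edge G h i j) [pred y | h' y != h y].
Proof.
move=> ij ph ph' hc x y /and3P[Gxy cx cy] /=; rewrite -!topredE /=.
have cx' : colored_ij h' i j x by rewrite -hc.
have cy' : colored_ij h' i j y by rewrite -hc.
exact: two_vals ij cx cy cx' cy' (ph _ _ Gxy) (ph' _ _ Gxy).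
Qed.

Lemma kempeL_lt (i j : 'I_k) : (i < j)%N -> forall N (h h' : col),
  #|[set v | h v != h' v]| <= N -> proper h -> proper h' ->
  (forall v, colored_ij h i j v = colored_ij h' i j v) ->
  (forall v, ~~ colored_ij h i j v -> h' v = h v) -> kequiv h h'.
Proof.
move=> ltij; have ij : i != j by rewrite neq_ltn ltij.
elim=> [|N IH] h h' hN ph ph' hc ho.
  have : h = h'.
    apply/ffunP => v; apply/eqP; apply/negPn/negP => hv.
    by move: hN; rewrite leqn0 => /eqP/cards0_eq/setP/(_ v); rewrite !inE hv.
  by move=> ->; exact: connect0.
have [/eqP e0|] := boolP ([set v | h v != h' v] == set0).
  have : h = h'.
    apply/ffunP => v; apply/eqP; apply/negPn/negP => hv.
    by move/setP: e0 => /(_ v); rewrite !inE hv.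
  by move=> ->; exact: connect0.
case/set0Pn => v; rewrite inE => hv.
have cv : colored_ij h i j v.
  by apply/negPn/negP => /ho hv'; move: hv; rewrite hv' eqxx.
set C := kempe_chain G h i j v.
set h1 := kempe_switch h i j C.
have st : kempe_step G h h1.
  by apply/existsP; exists i; apply/existsP; exists j; apply/existsP; exists v; rewrite ltij cv eqxx.
apply: connect_trans (connect1 st) _.
have ph1 : proper h1 by exact: switch_proper.
have cl := flip_closed ij ph ph' hc.
have flipC : forall x, x \in C -> h1 x = h' x.
  move=> x xC; have cx := chain_colored cv xC.
  have fx : h' x != h x.
    have xc : connect (kempe_edge G h i j) v x by move: xC; rewrite inE.
    by have := closed_connect cl xc; rewrite !inE /= => <-; rewrite eq_sym.
  rewrite switchE xC.
  have cx' : colored_ij h' i j x by rewrite -hc.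
  exact: flip_val ij fx cx cx'.
have hc1 : forall x, colored_ij h1 i j x = colored_ij h i j x.
  by move=> x; rewrite /colored_ij switchE; case: ifP => // _; rewrite sw_col.
apply: IH => //.
- rewrite -ltnS; apply: leq_trans hN.
  have -> : #|[set v | h v != h' v]| = #|[set v | h v != h' v] :\ v|.+1.
    by rewrite (cardsD1 v) inE hv.
  rewrite ltnS subset_leq_card //; apply/subsetP => x; rewrite !inE.
  case xC: (x \in C); first by rewrite flipC // eqxx.
  rewrite switchE xC => ->; rewrite andbT.
  by apply/eqP => exv; move: xC; rewrite exv inE connect0.
- by move=> x; rewrite hc1.
- move=> x; rewrite hc1 => ncx; rewrite ho // switchE.
  by case: ifP => // _; rewrite sw_ncol.
Qed.


Lemma kempeL (i j : 'I_k) (h h' : col) : i != j -> proper h -> proper h' ->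
  (forall v, colored_ij h i j v = colored_ij h' i j v) ->
  (forall v, ~~ colored_ij h i j v -> h' v = h v) -> kequiv h h'.
Proof.
move=> ij ph ph' hc ho.
case: (ltngtP i j) => [lt|lt|/val_inj e]; last by rewrite e eqxx in ij.
  exact: (@kempeL_lt i j lt _ h h' (leqnn _)).
apply: (@kempeL_lt j i lt _ h h' (leqnn _)) => // v.
  by rewrite !(colored_sym _ j).
by rewrite colored_sym => /ho.
Qed.

Definition recolor (h : col) (i j : 'I_k) (A B : {set 'I_d}) : col :=
  [ffun v => if v \in A then i else if v \in B then j else h v].

Lemma recolor_props (h : col) i j A B : i != j -> proper h ->
  stable G A -> stable G B -> [disjoint A & B] ->
  (forall v, (v \in A) || (v \in B) = colored_ij h i j v) ->
  [/\ proper (recolor h i j A B), kequiv h (recolor h i j A B),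
      cls (recolor h i j A B) i = A, cls (recolor h i j A B) j = B &
      forall l, l != i -> l != j -> cls (recolor h i j A B) l = cls h l].
Proof.
move=> ij ph sA sB dAB hAB.
have ji : j != i by rewrite eq_sym.
set h' := recolor h i j A B.
have cI : cls h' i = A.
  apply/setP => v; rewrite !inE ffunE; case: ifP => vA; first by rewrite eqxx.
  case: ifP => vB; first by rewrite (negbTE ji).
  apply/negbTE/negP => /eqP hv; move: (hAB v); rewrite vA vB /colored_ij hv eqxx.
  by [].
have cJ : cls h' j = B.
  apply/setP => v; rewrite !inE ffunE; case: ifP => vA.
    rewrite (negbTE ij); apply/esym/negbTE/negP => vB.
    by move: dAB; rewrite disjoint_subset => /subsetP/(_ v vA); rewrite inE vB.
  case: ifP => vB; first by rewrite eqxx.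
  apply/negbTE/negP => /eqP hv; move: (hAB v); rewrite vA vB /colored_ij hv eqxx orbT.
  by [].
have cL : forall l, l != i -> l != j -> cls h' l = cls h l.
  move=> l li lj; apply/setP => v; rewrite !inE ffunE.
  have := hAB v; rewrite /colored_ij.
  case: ifP => vA /=.
    by move=> /esym/orP[/eqP->|/eqP->] //; rewrite ![_ == l]eq_sym (negbTE li) (negbTE lj).
  case: ifP => vB /=.
    by move=> /esym/orP[/eqP->|/eqP->] //; rewrite ![_ == l]eq_sym (negbTE li) (negbTE lj).
  by [].
have ph' : proper h'.
  apply/(proper_stable h') => l.
  have [->|li] := eqVneq l i; first by rewrite cI.
  have [->|lj] := eqVneq l j; first by rewrite cJ.
  by rewrite cL //; move/(proper_stable h): ph.
have hc : forall v, colored_ij h i j v = colored_ij h' i j v.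
  move=> v; rewrite -hAB /colored_ij.
  by rewrite -{1}cI -{1}cJ !inE.
split => //.
apply: kempeL ij ph ph' hc _ => v nc.
rewrite ffunE; move: nc; rewrite -hAB.
by case: (v \in A); case: (v \in B).
Qed.

Lemma perm_kequiv : forall N (g h : col), #|[set v | g v != h v]| <= N ->
  proper g -> proper h -> (forall l, exists l', cls g l' = cls h l) -> kequiv g h.
Proof.
elim=> [|N IH] g h hN pg ph hex.
  have : g = h.
    apply/ffunP => v; apply/eqP; apply/negPn/negP => hv.
    by move: hN; rewrite leqn0 => /eqP/cards0_eq/setP/(_ v); rewrite !inE hv.
  by move=> ->; exact: connect0.
have [/eqP e0|] := boolP ([set v | g v != h v] == set0).
  have : g = h.
    apply/ffunP => v; apply/eqP; apply/negPn/negP => hv.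
    by move/setP: e0 => /(_ v); rewrite !inE hv.
  by move=> ->; exact: connect0.
case/set0Pn => v; rewrite inE => hv.
pose l := h v.
have [l' el'] := hex l.
have gv : g v = l'.
  by have /setP/(_ v) := el'; rewrite !inE eqxx => /eqP.
have ll' : l != l' by rewrite -gv eq_sym.
set g' : col := [ffun x => sw l l' (g x)].
have g'E : forall x, g' x = sw l l' (g x) by move=> x; rewrite ffunE.
have pg' : proper g'.
  by move=> x y Gxy; rewrite !g'E (inj_eq (can_inj (swK ll'))) pg.
apply: connect_trans (_ : kequiv g g') _.
  apply: (kempeL ll') => // x.
    by rewrite /colored_ij g'E sw_col.
  by move=> nc; rewrite g'E sw_ncol.
apply: IH => //.
- rewrite -ltnS; apply: leq_trans hN.
  have -> : #|[set v | g v != h v]| = #|[set v | g v != h v] :\ v|.+1.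
    by rewrite (cardsD1 v) inE hv.
  rewrite ltnS subset_leq_card //; apply/subsetP => x; rewrite !inE g'E /sw.
  case: ifP => [/eqP gx|gxl].
    move=> _; rewrite gx; apply/andP; split.
      by apply/eqP => xv; move: gx; rewrite xv gv => e; rewrite e eqxx in ll'.
    apply/negP => /eqP hx; have /setP/(_ x) := el'; rewrite !inE -hx gx eqxx.
    by move/eqP => e; rewrite e eqxx in ll'.
  case: ifP => [/eqP gx|gxl'].
    have /setP/(_ x) := el'; rewrite !inE gx eqxx => /esym/eqP ->.
    by rewrite eqxx.
  move=> ne; rewrite ne andbT; apply/eqP => xv; move: gxl'; rewrite xv gv eqxx.
  by [].
- move=> m; have [m' em'] := hex m; exists (sw l l' m').
  rewrite -em'; apply/setP => x; rewrite !inE g'E.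
  by rewrite (inj_eq (can_inj (swK ll'))).
Qed.

End Col.

Local Open Scope ring_scope.

Section Poly.
Variables (d k : nat) (G : rel 'I_d) (K : fieldType).
Local Notation col := {ffun 'I_d -> 'I_k}.
Local Notation proper := (is_coloring G).
Local Notation n := (nvars G).

Definition Um (S : {set 'I_d}) : 'X_{1..n} :=
  if @insub _ (stable G) (stableT G) S is Some s then U_(enum_rank s)%MM else 0%MM.

Definition mh (h : col) : 'X_{1..n} := (\sum_(l < k) Um (cls h l))%MM.

Lemma xset_Um S : stable G S -> xset G K S = 'X_[Um S].
Proof.
rewrite /xset /Um; case: insubP => [s _ _|/negP //] _.
by rewrite /xvar.
Qed.

Lemma xmon_mh (h : col) : proper h -> xmon_col G K h = 'X_[mh h].
Proof.
move=> ph; rewrite /xmon_col /mh -mprodXE; apply: eq_bigr => l _.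
by rewrite xset_Um //; apply: (proper_stable G h).1.
Qed.

Lemma UmE S a : stable G S -> (Um S a = (S == val (enum_val a)))%N.
Proof.
rewrite /Um; case: insubP => [s _ vs|/negP //] _.
rewrite mnm1E -vs; congr nat_of_bool.
apply/eqP/eqP => [<-|e]; first by rewrite enum_rankK.
by rewrite (val_inj e) enum_valK.
Qed.

Lemma Um_val a : Um (val (enum_val a)) = U_(a)%MM.
Proof.
rewrite /Um; case: insubP => [s _ vs|]; last by rewrite (valP (enum_val a)).
have -> : s = enum_val a by apply: val_inj.
by rewrite enum_valK.
Qed.

Lemma mdeg_Um S : stable G S -> mdeg (Um S) = 1%N.
Proof. by rewrite /Um; case: insubP => [s _ _|/negP //] _; rewrite mdeg1. Qed.

Lemma Um_inj S T : stable G S -> stable G T -> Um S = Um T -> S = T.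
Proof.
rewrite /Um; case: insubP => [s _ vs|/negP //] _; case: insubP => [t _ vt|/negP //] _.
by move/eqP; rewrite eq_mnm1 => /eqP /enum_rank_inj e; rewrite -vs -vt e.
Qed.

Definition wid (j : 'I_d) : 'I_d.+1 := widen_ord (leqnSn d) j.

Definition pmS (S : {set 'I_d}) : 'X_{1..d.+1} :=
  (U_(@ord_max d) + \sum_(j in S) U_(wid j))%MM.
Definition pm (i : 'I_n) := pmS (val (enum_val i)).
Definition pimono (e : 'X_{1..n}) : 'X_{1..d.+1} := (\sum_(i < n) (pm i *+ e i))%MM.

Lemma pimonoE e t : (pimono e t = \sum_(i < n) pm i t * e i)%N.
Proof. by rewrite /pimono mnm_sumE; apply: eq_bigr => i _; rewrite mulmnE. Qed.

Lemma pimonoD e e' : pimono (e + e')%MM = (pimono e + pimono e')%MM.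
Proof.
apply/mnmP => t; rewrite mnmDE !pimonoE -big_split /=.
by apply: eq_bigr => i _; rewrite mnmDE mulnDr.
Qed.

Lemma sum_delta N (F : 'I_N -> nat) a : (\sum_(i < N) F i * (a == i) = F a)%N.
Proof.
rewrite (bigD1 a) //= eqxx muln1 big1 ?addn0 // => i /negbTE.
by rewrite eq_sym => ->; rewrite muln0.
Qed.

Lemma pimonoU a : pimono U_(a)%MM = pm a.
Proof.
apply/mnmP => t; rewrite pimonoE -[RHS](sum_delta (fun i => pm i t) a).
by apply: eq_bigr => i _; rewrite mnm1E.
Qed.

Lemma pimonoUm S : stable G S -> pimono (Um S) = pmS S.
Proof.
move=> sS; have [a ea] : exists a : 'I_n, val (enum_val a) = S.
  by exists (enum_rank (exist _ S sS : stableT G)); rewrite enum_rankK.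
by rewrite -ea Um_val pimonoU.
Qed.

Lemma pmSE S t : (pmS S t = (@ord_max d == t) + \sum_(j in S) (wid j == t))%N.
Proof. by rewrite mnmDE mnm1E mnm_sumE; congr (_ + _)%N; apply: eq_bigr => j _; rewrite mnm1E. Qed.

Lemma pmS_wid S v : (pmS S (wid v) = (v \in S))%N.
Proof.
rewrite pmSE.
have -> : (@ord_max d == wid v) = false.
  by apply/negbTE; rewrite -val_eqE /= neq_ltn ltn_ord orbT.
rewrite add0n.
have e : forall j, (wid j == wid v) = (j == v) by move=> j; rewrite -val_eqE.
under eq_bigr do rewrite e.
case vS: (v \in S).
  rewrite (bigD1 v) //= eqxx big1 // => j /andP[_ /negbTE ->] //.
by rewrite big1 // => j jS; case: eqP => // ejv; rewrite -ejv jS in vS.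
Qed.

Lemma pmS_add (A B C D : {set 'I_d}) : [disjoint A & B] -> [disjoint C & D] -> A :|: B = C :|: D ->
  (pmS A + pmS B = pmS C + pmS D)%MM.
Proof.
move=> dAB dCD eU; apply/mnmP => t; rewrite mnmDE [RHS]mnmDE !pmSE.
rewrite addnACA [in RHS]addnACA; congr (_ + _)%N.
rewrite -!bigU //; apply: eq_bigl => j.
by have /setP/(_ j) := eU; rewrite !inE.
Qed.

Lemma piG_X e : piG ('X_[e] : RG G K) = 'X_[pimono e].
Proof.
rewrite /piG comp_mpolyX /pimono -mprodXnE; apply: eq_bigr => i _.
rewrite tnth_mktuple /pi_var /pm /pmS mpolyXD mprodXE //.
Qed.

Lemma in_ideal_add (P : pred (RG G K)) p q :
  in_ideal_gen P p -> in_ideal_gen P q -> in_ideal_gen P (p + q).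
Proof.
move=> [s1 [a1 ->]] [s2 [a2 ->]]; exists (s1 ++ s2); split.
  by rewrite all_cat a1 a2.
by rewrite big_cat.
Qed.

Lemma IG2_binom e e' : mdeg e = 2%N -> mdeg e' = 2%N -> pimono e = pimono e' ->
  IG2 ('X_[e] - 'X_[e'] : RG G K).
Proof.
move=> de de' pe; apply/andP; split.
  apply/allP => m /msuppB_le; rewrite mem_cat !msuppX !inE.
  by case/orP => /eqP -> /=; rewrite ?de ?de'.
have piGB : forall p q : RG G K, piG (p - q) = piG p - piG q.
  by move=> p q; rewrite /piG comp_mpolyB.
by rewrite /in_IG piGB !piG_X pe subrr.
Qed.


Lemma mh_split (h : col) i j : i != j -> mh h =
  (Um (cls h i) + Um (cls h j) + \sum_(l | (l != i) && (l != j)) Um (cls h l))%MM.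
Proof.
move=> ij; rewrite /mh (bigD1 i) //= (bigD1 j) /=; last by rewrite eq_sym.
by rewrite addmA.
Qed.

Lemma cls_disj (h : col) i j : i != j -> [disjoint cls h i & cls h j].
Proof.
move=> ij; rewrite -setI_eq0; apply/eqP/setP => v; rewrite !inE.
by apply/negP => /andP[/eqP-> /eqP e]; rewrite e eqxx in ij.
Qed.

Lemma cls_union (h : col) i j : cls h i :|: cls h j = [set v | colored_ij h i j v].
Proof. by apply/setP => v; rewrite !inE. Qed.

Lemma fwd_step (f g : col) i j : i != j -> proper f -> proper g ->
  (forall v, colored_ij f i j v = colored_ij g i j v) ->
  (forall v, ~~ colored_ij f i j v -> g v = f v) ->
  in_ideal_gen (@IG2 _ G K) (xmon_col G K f - xmon_col G K g).
Proof.
move=> ij pf pg hc ho.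
have sf := (proper_stable G f).1 pf; have sg := (proper_stable G g).1 pg.
rewrite !xmon_mh // !(mh_split _ ij).
have eR : (\sum_(l | (l != i) && (l != j)) Um (cls g l) = \sum_(l | (l != i) && (l != j)) Um (cls f l))%MM.
  apply: eq_bigr => l /andP[li lj]; congr Um; apply/setP => v; rewrite !inE.
  case cv: (colored_ij f i j v); last by rewrite ho ?cv.
  have cg : colored_ij g i j v by rewrite -hc.
  move: cv cg; rewrite /colored_ij => /orP[/eqP->|/eqP->] /orP[/eqP->|/eqP->] //;
    by rewrite ![_ == l]eq_sym (negbTE li) (negbTE lj).
rewrite eR; set R := (\sum_(l | _) _)%MM.
exists [:: ('X_[R], 'X_[Um (cls f i) + Um (cls f j)] - 'X_[Um (cls g i) + Um (cls g j)])].
split; last by rewrite big_cons big_nil addr0 /= mulrBr -!mpolyXD ![(R + _)%MM]addmC.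
rewrite /= andbT; apply: IG2_binom; rewrite ?mdegD ?mdeg_Um //.
rewrite !pimonoD !pimonoUm //; apply: pmS_add; rewrite ?cls_disj // !cls_union.
by apply/setP => v; rewrite !inE hc.
Qed.

Lemma forward (Gsym : ssrbool.symmetric G) (f g : col) : proper f ->
  kempe_equiv G f g -> in_ideal_gen (@IG2 _ G K) (xmon_col G K f - xmon_col G K g).
Proof.
move=> pf /connectP [p pth ->]; elim: p f pf pth => [|x p IH] f pf /=.
  by move=> _; exists [::]; split => //; rewrite big_nil subrr.
case/andP => st pth.
case/existsP: st => i /existsP[j /existsP[u /and3P[ltij cu /eqP ex]]].
have ij : i != j by rewrite neq_ltn ltij.
have px : proper x by rewrite ex; apply: switch_proper.
rewrite -(subrK (xmon_col G K x) (xmon_col G K f)) -addrA.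
apply: in_ideal_add; last exact: IH.
apply: (fwd_step ij) => // v; rewrite ex ?switch_colored //.
by move/switch_ncol.
Qed.

End Poly.

Section Gen.
Variable K : fieldType.

Lemma sum_eq_mem (B : eqType) (r : seq B) x : uniq r ->
  \sum_(w <- r) ((x == w)%:R : K) = (x \in r)%:R.
Proof.
elim: r => [|w r IH] /=; first by rewrite big_nil.
case/andP => wr ur; rewrite big_cons IH // in_cons.
case: eqP => [->|_]; last by rewrite add0r.
by rewrite (negbTE wr) addr0.
Qed.

Lemma fibre_sum (A B : eqType) (s : seq A) (F : A -> K) (pi : A -> B) (P : pred A) :
  (forall mu, \sum_(e <- s) F e * (pi e == mu)%:R = 0) ->
  {in s &, forall e e', pi e = pi e' -> P e = P e'} ->
  \sum_(e <- s) F e * (P e)%:R = 0.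
Proof.
move=> h1 h2.
set U := undup (map pi s).
have one : forall e, e \in s -> \sum_(mu <- U) ((pi e == mu)%:R : K) = 1.
  by move=> e es; rewrite sum_eq_mem ?undup_uniq // mem_undup map_f.
transitivity (\sum_(e <- s) \sum_(mu <- U) F e * (P e)%:R * (pi e == mu)%:R).
  rewrite big_seq_cond [RHS]big_seq_cond; apply: eq_bigr => e /andP[es _].
  by rewrite -mulr_sumr one // mulr1.
rewrite exchange_big big_seq big1 // => mu; rewrite mem_undup => /mapP[e0 e0s ->].
transitivity ((P e0)%:R * \sum_(e <- s) F e * (pi e == pi e0)%:R); last by rewrite h1 mulr0.
rewrite mulr_sumr big_seq_cond [RHS]big_seq_cond.
apply: eq_bigr => e /andP[es _].
have [ee|ne] := eqVneq (pi e) (pi e0); last by rewrite !mulr0.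
by rewrite (h2 _ _ es e0s ee) !mulr1 mulrC.
Qed.

Lemma mdeg2P N (e : 'X_{1..N}) : mdeg e = 2%N -> exists a b, e = (U_(a) + U_(b))%MM.
Proof.
move=> de.
have [a ha] : exists a : 'I_N, e a != 0%N.
  case: (pickP (fun a => e a != 0%N)) => [a ha|h0]; first by exists a.
  have e0 : e = 0%MM by apply/mnmP => i; rewrite mnm0E; move: (h0 i) => /= /negbFE/eqP.
  by move: de; rewrite e0 mdeg0.
have le : (U_(a) <= e)%MM by rewrite lep1mP.
have ee := submK le.
have : mdeg (e - U_(a))%MM = 1%N.
  have := mdegD (e - U_(a))%MM U_(a); rewrite ee mdeg1 de; lia.
move/eqP/mdeg1P => [b /eqP eb]; exists b, a; by rewrite -ee eb.
Qed.
End Gen.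

Section Back.
Variables (d k : nat) (G : rel 'I_d) (Gsym : ssrbool.symmetric G) (K : fieldType).
Variables (f : {ffun 'I_d -> 'I_k}) (pf : is_coloring G f).
Local Notation col := {ffun 'I_d -> 'I_k}.
Local Notation proper := (is_coloring G).
Local Notation n := (nvars G).
Local Notation RGK := (RG G K).

Definition properb (h : col) := [forall u, forall v, G u v ==> (h u != h v)].

Lemma properbP h : reflect (proper h) (properb h).
Proof.
apply: (iffP idP) => [/forallP hp u v Guv|hp].
  by move: (hp u) => /forallP/(_ v)/implyP; apply.
by apply/forallP => u; apply/forallP => v; apply/implyP => /hp.
Qed.

Definition W := undup [seq mh G h | h <- enum {ffun 'I_d -> 'I_k} &
  properb h && connect (kempe_step G) f h].

Lemma memW m : reflect (exists h, [/\ proper h, kempe_equiv G f h & mh G h = m]) (m \in W).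
Proof.
rewrite mem_undup; apply: (iffP mapP) => [[h]|[h [ph kh <-]]].
  by rewrite mem_filter mem_enum andbT => /andP[/properbP ph kh] ->; exists h.
by exists h => //; rewrite mem_filter mem_enum andbT; apply/andP; split => //; apply/properbP.
Qed.

Definition phi (p : RGK) : K := \sum_(w <- W) p@_w.

Lemma phi_X m : phi 'X_[m] = (m \in W)%:R.
Proof.
rewrite /phi (eq_bigr (fun w => (m == w)%:R)) ?sum_eq_mem ?undup_uniq //.
by move=> w _; rewrite mcoeffX.
Qed.

Lemma phiB p q : phi (p - q) = phi p - phi q.
Proof. by rewrite /phi -sumrB; apply: eq_bigr => w _; rewrite mcoeffB. Qed.

Lemma phiZ c p : phi (c *: p) = c * phi p.
Proof. by rewrite /phi mulr_sumr; apply: eq_bigr => w _; rewrite mcoeffZ. Qed.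

Lemma phi_sum (I : Type) (r : seq I) (F : I -> RGK) :
  phi (\sum_(x <- r) F x) = \sum_(x <- r) phi (F x).
Proof.
rewrite /phi (eq_bigr (fun w => \sum_(x <- r) (F x)@_w)); first exact: exchange_big.
by move=> w _; rewrite raddf_sum.
Qed.

Lemma piG_coef (q : RGK) mu :
  (piG q)@_mu = \sum_(e <- msupp q) q@_e * (pimono e == mu)%:R.
Proof.
rewrite /piG comp_mpolyEX raddf_sum; apply: eq_bigr => e _.
by rewrite /= mcoeffZ; have := piG_X K e; rewrite /piG => ->; rewrite mcoeffX.
Qed.

Lemma mh_cnt h x : proper h -> (mh G h x = \sum_(l < k) (cls h l == val (enum_val x)))%N.
Proof.
move=> ph; rewrite /mh mnm_sumE; apply: eq_bigr => l _; rewrite UmE //.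
exact: (proper_stable G h).1.
Qed.

Lemma exists_pos (Q P : pred 'I_k) : (0 < \sum_(l < k | Q l) P l)%N -> exists l, Q l && P l.
Proof.
case: (pickP (fun l => Q l && P l)) => [l hl|h0]; first by exists l.
by rewrite big1 // => l ql; move: (h0 l); rewrite ql /= => ->.
Qed.

Lemma exists_pos1 (P : pred 'I_k) : (0 < \sum_(l < k) P l)%N -> exists l, P l.
Proof.
case: (pickP P) => [l hl|h0]; first by exists l.
by rewrite big1 // => l _; rewrite h0.
Qed.

Lemma good_fibre (n0 : 'X_{1..n}) (a b c e : 'I_n) :
  (pm a + pm b = pm c + pm e)%MM ->
  (n0 + (U_(a) + U_(b)))%MM \in W -> (n0 + (U_(c) + U_(e)))%MM \in W.
Proof.
move=> hp /memW [h [ph kh ehm]].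
set Sa := val (enum_val a); set Sb := val (enum_val b).
set Sc := val (enum_val c); set Se := val (enum_val e).
have [i hi] : exists i, cls h i == Sa.
  apply: exists_pos1; rewrite -mh_cnt // ehm !mnmDE mnm1E eqxx.
  by rewrite add1n addnS.
have [j /andP[ji hj]] : exists j, (j != i) && (cls h j == Sb).
  apply: exists_pos.
  have := mh_cnt b ph; rewrite ehm (bigD1 i) //= (eqP hi) !mnmDE !mnm1E eqxx.
  have -> : (Sa == Sb) = (a == b) by rewrite /Sa /Sb val_eqE (inj_eq enum_val_inj).
  move/eqP; rewrite /= addnCA eqn_add2l => /eqP <-; by rewrite addn1.
move/eqP in hi; move/eqP in hj.
have ij : i != j by rewrite eq_sym.
have ms := @mh_split _ _ G h i j ij; rewrite hi hj !Um_val in ms.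
set R := (\sum_(l | _) _)%MM in ms.
have eR : n0 = R.
  apply: (@addIm _ (U_(a) + U_(b))%MM); rewrite /= -ehm ms addmC //.
have part : forall v, ((v \in Sa) + (v \in Sb) = (v \in Sc) + (v \in Se))%N.
  move=> v; have := congr1 (fun m : 'X_{1..d.+1} => m (wid v)) hp.
  by rewrite /= mnmDE [RHS]mnmDE /pm !pmS_wid.
have dab : forall v, ~~ ((v \in Sa) && (v \in Sb)).
  move=> v; rewrite -hi -hj !inE; apply/negP => /andP[/eqP-> /eqP ee].
  by rewrite ee eqxx in ij.
have dCE : [disjoint Sc & Se].
  rewrite -setI_eq0; apply/eqP/setP => v; rewrite !inE.
  move: (part v) (dab v).
  by case: (v \in Sa); case: (v \in Sb); case: (v \in Sc); case: (v \in Se).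
have hAB : forall v, (v \in Sc) || (v \in Se) = colored_ij h i j v.
  move=> v; rewrite /colored_ij.
  have -> : (h v == i) = (v \in Sa) by rewrite -hi inE.
  have -> : (h v == j) = (v \in Sb) by rewrite -hj inE.
  move: (part v) (dab v).
  by case: (v \in Sa); case: (v \in Sb); case: (v \in Sc); case: (v \in Se).
have [ph' kh' ci cj cl] := recolor_props Gsym ij ph (valP (enum_val c)) (valP (enum_val e)) dCE hAB.
apply/memW; exists (recolor h i j Sc Se); split => //.
  exact: connect_trans kh kh'.
rewrite (@mh_split _ _ G _ i j ij) ci cj !Um_val eR addmC; congr (_ + _)%MM.
by apply: eq_bigr => l /andP[li lj]; rewrite cl.
Qed.

Lemma phi_MX (n0 : 'X_{1..n}) (q : RGK) : IG2 q -> phi ('X_[n0] * q) = 0.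
Proof.
move=> /andP[hq iq].
rewrite {1}(mpolyE q) mulr_sumr phi_sum.
rewrite (eq_bigr (fun e => q@_e * ((n0 + e)%MM \in W)%:R)); last first.
  by move=> e _; rewrite -scalerAr -mpolyXD phiZ phi_X.
apply: (@fibre_sum _ _ _ _ _ (@pimono _ G)).
  by move=> mu; rewrite -piG_coef (eqP iq) mcoeff0.
have deg : forall e, e \in msupp q -> mdeg e = 2%N by move=> e /(allP hq) /eqP.
move=> e e' /deg/mdeg2P [a [b ->]] /deg/mdeg2P [c [e2 ->]].
rewrite !pimonoD !pimonoU => hp.
by apply/idP/idP; apply: good_fibre.
Qed.

Lemma phi_mul (r q : RGK) : IG2 q -> phi (r * q) = 0.
Proof.
move=> hq; rewrite {1}(mpolyE r) mulr_suml phi_sum big1 // => m _.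
by rewrite -scalerAl phiZ phi_MX // mulr0.
Qed.

Lemma phi_ideal p : in_ideal_gen (@IG2 _ G K) p -> phi p = 0.
Proof.
case=> s [hs ->]; rewrite phi_sum big_seq big1 // => x /(allP hs) hx.
exact: phi_mul.
Qed.

Lemma backward (g : col) : proper g ->
  in_ideal_gen (@IG2 _ G K) (xmon_col G K f - xmon_col G K g) -> kempe_equiv G f g.
Proof.
move=> pg /phi_ideal; rewrite !xmon_mh // phiB !phi_X.
have -> : mh G f \in W by apply/memW; exists f; split => //; exact: connect0.
case: (boolP (mh G g \in W)) => [/memW [h [ph kh ehg]] _|_]; last first.
  by rewrite subr0 => /eqP; rewrite oner_eq0.
apply: connect_trans kh _.
apply: (perm_kequiv Gsym (leqnn _)) => // l.
have sg := (proper_stable G g).1 pg l.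
pose a := enum_rank (exist _ (cls g l) sg : stableT G).
have ea : val (enum_val a) = cls g l by rewrite enum_rankK.
have : (0 < mh G h a)%N.
  by rewrite ehg (mh_cnt _ pg) (bigD1 l) //= ea eqxx.
rewrite (mh_cnt _ ph) => /exists_pos1 [l' /eqP e]; exists l'; by rewrite e ea.
Qed.

End Back.

End Helpers.

Local Open Scope ring_scope.

Theorem proposition2p3 (K : fieldType) (d k : nat) (G : rel 'I_d)
  (Gsym : ssrbool.symmetric G) (Girr : irreflexive G) (hk : (1 <= k)%N)
  (f g : {ffun 'I_d -> 'I_k}) :
  is_coloring G f -> is_coloring G g ->
  (kempe_equiv G f g <->
   in_ideal_gen (@IG2 _ G K) (xmon_col G K f - xmon_col G K g)).
Proof.
move=> pf pg; split.
  exact: (Helpers.forward K Gsym pf).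
exact: (Helpers.backward Gsym pf pg).
Qed.
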